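(* Let $G$ be a finite group and $N\lhd G$ such that the short exact sequence $1\to N\to G\to G/N\to1$ splits. Then $\mathcal{K}_r^S(G/N)=1$ in the Burnside ring $\Omega(G)$.
   Context: $\Omega(G)$ is the Burnside ring of $G$ (Grothendieck ring of finite $G$-sets under disjoint union and Cartesian product), with dimension homomorphism $\alpha(X)=|X|$ and regular element $r=G/\{e\}$. $S=\{G/H_1,\dots,G/H_n\}$ where $H_1,\dots,H_n$ is a full set of representatives of the conjugacy classes of subgroups of $G$. For $x\in\Omega(G)$, $S(x)=\{s\in S: s\cdot x\in\mathbb{Z}r\}$, $\mathrm{Ind}(x)=\{m\in\mathbb{Z}: s\cdot x=m r \text{ for some } s\in S(x)\}$, and $\mathcal{K}_r^S(x)=\gcd(\mathrm{Ind}(x))$ (with $\mathcal{K}_r^S(x)=\infty$ if $S(x)=\emptyset$). *)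

(* Defs.v *)
(* Burnside ring of a finite group, following the
   Grothendieck-ring definition: finite G-sets are finite types with a
   (right) action of G; classes [X] and [Y] agree in Omega(G) iff
   X + Z ~= Y + Z for some finite G-set Z. *)
From mathcomp Require Import all_boot all_fingroup all_algebra.
Set Implicit Arguments.
Unset Strict Implicit.
Unset Printing Implicit Defensive.

Import GroupScope.

Section Burnside.
Variable gT : finGroupType.

Definition equivariant (G : {set gT}) (T1 T2 : finType)
  (a1 : T1 -> gT -> T1) (a2 : T2 -> gT -> T2) (f : T1 -> T2) : Prop :=
  forall x g, g \in G -> f (a1 x g) = a2 (f x) g.

Definition gset_iso (G : {set gT}) (T1 T2 : finType)
  (a1 : T1 -> gT -> T1) (a2 : T2 -> gT -> T2) : Prop :=
  exists f : T1 -> T2, bijective f /\ equivariant G a1 a2 f.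

Definition sum_act (T1 T2 : finType) (a1 : T1 -> gT -> T1) (a2 : T2 -> gT -> T2)
  : T1 + T2 -> gT -> T1 + T2 :=
  fun x g => match x with inl y => inl (a1 y g) | inr z => inr (a2 z g) end.

Definition prod_act (T1 T2 : finType) (a1 : T1 -> gT -> T1) (a2 : T2 -> gT -> T2)
  : T1 * T2 -> gT -> T1 * T2 :=
  fun x g => (a1 x.1 g, a2 x.2 g).

Definition triv_act (T : finType) : T -> gT -> T := fun x _ => x.

(* The transitive G-set G/H, realised as the right cosets H x (x in G),
   with G acting by right translation. *)
Definition coset_type (G H : {set gT}) := {A : {set gT} | A \in rcosets H G}.

Definition coset_act (G H : {set gT}) : coset_type G H -> gT -> coset_type G H :=
  fun A g => insubd A (val A :* g).

(* k copies of the regular G-set r = G/{e} *)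
Definition reg_copies_act (G : {set gT}) (k : nat)
  : coset_type G 1 * 'I_k -> gT -> coset_type G 1 * 'I_k :=
  prod_act (@coset_act G 1) (@triv_act 'I_k).

Definition pospart (m : int) : nat := if m is Posz n then n else 0.
Definition negpart (m : int) : nat := if m is Negz n then n.+1 else 0.

(* [X] = m r in Omega(G), for a finite G-set X and m an integer:
   [X] + m^- [r] = m^+ [r] in the Grothendieck ring. *)
Definition eq_mult_reg (G : {set gT}) (T : finType) (a : T -> gT -> T) (m : int)
  : Prop :=
  exists (Z : finType) (az : Z -> gT -> Z), is_action G az /\
    gset_iso G (sum_act (sum_act a (@reg_copies_act G (negpart m))) az)
               (sum_act (@reg_copies_act G (pospart m)) az).

Definition conj_class_reps (G : {group gT}) (reps : {set {group gT}}) : Prop :=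
  (forall H : {group gT}, H \in reps -> H \subset G) /\
  (forall K : {group gT}, K \subset G ->
     exists! H : {group gT}, H \in reps /\ exists2 g, g \in G & K :=: H :^ g).

(* Ind(x): integers m with s.x = m r for some s = G/H, H in reps *)
Definition Ind (G : {group gT}) (reps : {set {group gT}})
  (T : finType) (a : T -> gT -> T) (m : int) : Prop :=
  exists2 H : {group gT}, H \in reps &
    eq_mult_reg G (prod_act (@coset_act G H) a) m.

Definition S_nonempty (G : {group gT}) (reps : {set {group gT}})
  (T : finType) (a : T -> gT -> T) : Prop :=
  exists m, Ind G reps a m.

(* K_r^S(x) = k  (k a natural number, i.e. S(x) nonempty and k = gcd Ind(x)) *)
Definition Kr_is (G : {group gT}) (reps : {set {group gT}})
  (T : finType) (a : T -> gT -> T) (k : nat) : Prop :=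
  [/\ S_nonempty G reps a,
      (forall m, Ind G reps a m -> ((k:int) %| m)%Z) &
      (forall d : int, (forall m, Ind G reps a m -> (d %| m)%Z) -> (d %| (k:int))%Z)].

End Burnside.

(* Main.v *)
Require Import Defs.
From mathcomp Require Import all_boot all_fingroup all_algebra.
From mathcomp Require Import zify.
Import GroupScope.

Section Aux.
Variable gT : finGroupType.

Lemma rcosetsP' (G H : {group gT}) A :
  A \in rcosets H G -> exists2 x, x \in G & A = H :* x.
Proof. case/imsetP=> x Gx ->; exists x => //; by rewrite rcosetE. Qed.

Lemma coset_act_val (G H : {group gT}) (A : coset_type G H) g :
  g \in G -> val (coset_act A g) = val A :* g.
Proof.
move=> Gg; rewrite /coset_act insubdK //.
have [x Gx ->] := rcosetsP' _ _ _ (valP A).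
rewrite -rcosetM; apply/imsetP; exists (x * g); rewrite ?groupM // rcosetE //=.
Qed.

Lemma card_coset_type (G H : {group gT}) : #|{: coset_type G H}| = #|G : H|.
Proof. by rewrite card_sig; apply: eq_card. Qed.

Lemma iso_of_rev (G : {set gT}) (T1 T2 : finType)
  (a1 : T1 -> gT -> T1) (a2 : T2 -> gT -> T2) (f : T2 -> T1) :
  bijective f -> equivariant G a2 a1 f -> gset_iso G a1 a2.
Proof.
case=> h fK hK eqf; exists h; split; first by exists f.
move=> x g Gg; apply: (can_inj fK).
by rewrite hK eqf // hK.
Qed.

End Aux.

Theorem lemma3p4 (gT : finGroupType) (G N : {group gT})
  (reps : {set {group gT}}) :
  N <| G -> [splits G, over N] -> conj_class_reps G reps ->
  Kr_is G reps (@coset_act gT G N) 1.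
Proof.
move=> nNG /splitsP [K /complP [tiNK defG]] [repsG repsP].
have sKG : K \subset G by rewrite -defG mulG_subr.
have [H [[Hreps [g Gg defK]] _]] := repsP K sKG.
have sHG := repsG H Hreps.
have defH : H :=: K :^ g^-1 by rewrite defK conjsgK.
have NJ : N :^ g^-1 = N.
  by apply/normP; rewrite (subsetP (normal_norm nNG)) // groupV.
have tiHN : H :&: N = 1.
  by rewrite defH -[X in _ :&: X]NJ -conjIg setIC tiNK conjs1g.
have cardG : #|G| = (#|H| * #|N|)%N.
  by rewrite -defG TI_cardMg // defH cardJg mulnC.
have eq1 : eq_mult_reg G (prod_act (@coset_act gT G H) (@coset_act gT G N)) 1.
  exists void, (fun x _ => x); split.
    by split=> [? []|[]].
  rewrite /=.
  have H1 : H :* 1 \in rcosets H G by apply/imsetP; exists 1; rewrite ?rcosetE.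
  have N1 : N :* 1 \in rcosets N G by apply/imsetP; exists 1; rewrite ?rcosetE.
  pose psiH x : coset_type G H := insubd (Sub (H :* 1) H1 : coset_type G H) (H :* x).
  pose psiN x : coset_type G N := insubd (Sub (N :* 1) N1 : coset_type G N) (N :* x).
  have vpsiH x : x \in G -> val (psiH x) = H :* x.
    by move=> Gx; rewrite /psiH insubdK //; apply/imsetP; exists x; rewrite ?rcosetE.
  have vpsiN x : x \in G -> val (psiN x) = N :* x.
    by move=> Gx; rewrite /psiN insubdK //; apply/imsetP; exists x; rewrite ?rcosetE.
  have single (A : coset_type G 1) : exists2 x, x \in G & val A = [set x].
    by have [x Gx ->] := rcosetsP' _ _ _ _ (valP A); exists x; rewrite // mul1g.
  pose phi (y : (coset_type G 1 * 'I_1) + void) :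
      ((coset_type G H * coset_type G N) + (coset_type G 1 * 'I_0)) + void :=
    match y with
    | inl (A, _) => inl (inl (psiH (repr (val A)), psiN (repr (val A))))
    | inr v => match v with end
    end.
  apply: (@iso_of_rev _ _ _ _ _ _ phi).
    apply: inj_card_bij.
      case=> [[A i]|[]] [[B j]|[]] //= [eH eN].
      have [x Gx vA] := single A; have [y Gy vB] := single B.
      move: eH eN; rewrite vA vB !repr_set1 => eH eN.
      move/(congr1 val): eH; rewrite !vpsiH // => eH.
      move/(congr1 val): eN; rewrite !vpsiN // => eN.
      have xyH : x * y^-1 \in H by rewrite -mem_rcoset -eH rcoset_refl.
      have xyN : x * y^-1 \in N by rewrite -mem_rcoset -eN rcoset_refl.
      have : x * y^-1 \in H :&: N by rewrite inE xyH.
      rewrite tiHN => /set1P/eqP; rewrite -eq_mulgV1 => /eqP exy.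
      congr inl; congr pair; first by apply: val_inj; rewrite vA vB exy.
      by rewrite !ord1.
    rewrite !card_sum !card_prod !card_ord card_void !card_coset_type indexg1.
    have LH := Lagrange sHG.
    have LN := Lagrange (normal_sub nNG).
    have Gpos : (0 < #|G|)%N by apply: cardG_gt0.
    nia.
  case=> [[A i]|[]] h Gh //=.
  have [x Gx vA] := single A.
  congr inl; congr inl.
  have rA : repr (sval A) = x by rewrite -[sval A]/(val A) vA repr_set1.
  rewrite coset_act_val // vA mulg_set1 !repr_set1 rA.
  congr pair; apply: val_inj.
    by rewrite coset_act_val // !vpsiH ?groupM // rcosetM.
  by rewrite coset_act_val // !vpsiN ?groupM // rcosetM.
split.
- by exists (Posz 1); exists H.
- by move=> m _; apply: dvd1z.
- by move=> d hd; apply: hd; exists H.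
Qed.
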